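(* Let $B\ge1$, $\mathcal{E}>0$, $c>0$, and $\mathsf{MSE}(\mathbf{i},\mathbf{t})=c\sum_{b=0}^{B-1}4^b\exp(-2(i_b-1)t_b)$. Let $\mathbf{i}^{(0)}=(2,\dots,2)$, $\mathbf{t}^{(0)}=\frac{\mathcal{E}}{4B}(1,\dots,1)$ (uniform energy allocation), and let $\widetilde{\mathbf{t}}$ be the optimal solution of minimizing $\sum_b4^b\exp(-2t_b)$ subject to $\sum_b 4t_b\le\mathcal{E}$, $t_b\ge0$. If $\mathcal{E}>2B(B-1)\log2$, then $$\mathsf{MSE}(\mathbf{i}^{(0)},\widetilde{\mathbf{t}})=c\cdot\frac{B}{2}\cdot2^B\exp\Bigl(-\frac{\mathcal{E}}{2B}\Bigr),\qquad \mathsf{MSE}(\mathbf{i}^{(0)},\mathbf{t}^{(0)})=c\cdot\frac{4^B-1}{3}\exp\Bigl(-\frac{\mathcal{E}}{2B}\Bigr),$$ and hence $$\gamma=\frac{\mathsf{MSE}(\mathbf{i}^{(0)},\widetilde{\mathbf{t}})}{\mathsf{MSE}(\mathbf{i}^{(0)},\mathbf{t}^{(0)})}=\frac{3B}{2}\cdot\frac{2^B}{4^B-1}.$$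
   Context: $\log$ denotes the natural logarithm. $\widetilde{\mathbf{t}}$ is the output of one step of alternate convex search (duration update) with currents fixed at $i_b=2$ for all $b$. *)

(* Defs.v *)
From Stdlib Require Import Reals Lra Lia.
Open Scope R_scope.

Fixpoint rsum (n : nat) (f : nat -> R) : R :=
  match n with
  | O => 0
  | S m => rsum m f + f m
  end.

Definition MSE (c : R) (B : nat) (i t : nat -> R) : R :=
  c * rsum B (fun b => 4 ^ b * exp (- 2 * (i b - 1) * t b)).

(* objective of the duration-update subproblem with i_b = 2 *)
Definition dur_obj (B : nat) (t : nat -> R) : R :=
  rsum B (fun b => 4 ^ b * exp (- 2 * t b)).

Definition dur_feasible (B : nat) (E : R) (t : nat -> R) : Prop :=
  rsum B (fun b => 4 * t b) <= E /\ (forall b, (b < B)%nat -> 0 <= t b).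

Definition dur_optimal (B : nat) (E : R) (t : nat -> R) : Prop :=
  dur_feasible B E t /\ forall t', dur_feasible B E t' -> dur_obj B t <= dur_obj B t'.

Definition i0 : nat -> R := fun _ => 2.
Definition t0 (B : nat) (E : R) : nat -> R := fun _ => E / (4 * INR B).

(* Main.v *)
Require Import Defs.
From Stdlib Require Import Reals Lra Lia.
Open Scope R_scope.

Lemma rsum_ext n f g : (forall b, (b < n)%nat -> f b = g b) -> rsum n f = rsum n g.
Proof. induction n; simpl; intros H; [reflexivity|]. rewrite IHn by (intros; apply H; lia). rewrite H by lia. reflexivity. Qed.

Lemma rsum_le n f g : (forall b, (b < n)%nat -> f b <= g b) -> rsum n f <= rsum n g.
Proof. induction n; simpl; intros H; [lra|]. assert (f n <= g n) by (apply H; lia).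
 assert (rsum n f <= rsum n g) by (apply IHn; intros; apply H; lia). lra. Qed.

Lemma rsum_lin n a f g : rsum n (fun b => a * f b + g b) = a * rsum n f + rsum n g.
Proof. induction n; simpl; [ring|]. rewrite IHn. ring. Qed.

Lemma rsum_const n a : rsum n (fun _ => a) = INR n * a.
Proof. induction n; simpl rsum; [simpl; ring|]. rewrite IHn, S_INR. ring. Qed.

Lemma rsum_id n : rsum n (fun b => INR b) = INR n * (INR n - 1) / 2.
Proof. induction n; simpl rsum; [simpl; field|]. rewrite IHn, S_INR. field. Qed.

Lemma exp2 n : exp (INR n * ln 2) = 2 ^ n.
Proof. rewrite <- Rpower_pow by lra. reflexivity. Qed.

Lemma key n x : 4 ^ n * exp (-2 * (INR n * ln 2 + x)) = exp (-2 * x).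
Proof.
  replace (-2 * (INR n * ln 2 + x)) with (-2 * x + - (INR n * ln 2) + - (INR n * ln 2)) by ring.
  rewrite !exp_plus, !exp_Ropp, exp2.
  replace 4 with (2*2) by ring. rewrite Rpow_mult_distr.
  assert (0 < 2 ^ n) by (apply pow_lt; lra). field. lra.
Qed.

Theorem theorem5 (B : nat) (E c : R) (tt : nat -> R) :
  (1 <= B)%nat -> 0 < E -> 0 < c ->
  dur_optimal B E tt ->
  E > 2 * INR B * (INR B - 1) * ln 2 ->
  MSE c B i0 tt = c * (INR B / 2) * 2 ^ B * exp (- (E / (2 * INR B))) /\
  MSE c B i0 (t0 B E) = c * ((4 ^ B - 1) / 3) * exp (- (E / (2 * INR B))) /\
  MSE c B i0 tt / MSE c B i0 (t0 B E) = (3 * INR B / 2) * (2 ^ B / (4 ^ B - 1)).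
Proof.
  intros HB HE Hc [Hf Hopt] HE2.
  assert (HBr : 1 <= INR B) by (apply (le_INR 1); lia).
  assert (Hln : 0 < ln 2) by (rewrite <- ln_1; apply ln_increasing; lra).
  set (a := (E - 2 * INR B * (INR B - 1) * ln 2) / (4 * INR B)).
  assert (Ha : 0 < a) by (unfold a; apply Rdiv_lt_0_compat; lra).
  set (ts := fun b : nat => INR b * ln 2 + a).
  set (K := exp (-2 * a)).
  assert (HK : 0 < K) by apply exp_pos.
  assert (Hsts : rsum B (fun b => 4 * ts b) = E).
  { unfold ts. rewrite (rsum_ext B _ (fun b => (4 * ln 2) * INR b + 4 * a)) by (intros; ring).
    rewrite rsum_lin, rsum_id, rsum_const. unfold a. field. lra. }
  assert (Hfs : dur_feasible B E ts).
  { split. lra. intros b _. unfold ts. pose proof (pos_INR b). nra. }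
  assert (Hobj_ts : dur_obj B ts = INR B * K).
  { unfold dur_obj, ts. rewrite (rsum_ext B _ (fun _ => K)) by (intros; apply key).
    apply rsum_const. }
  assert (Hlow : forall t, dur_feasible B E t -> INR B * K <= dur_obj B t).
  { intros t [Ht _]. unfold dur_obj.
    apply Rle_trans with (rsum B (fun b => (-2*K) * (t b - ts b) + K)).
    - rewrite rsum_lin, rsum_const.
      rewrite (rsum_ext B (fun b => t b - ts b) (fun b => (1/4) * (4 * t b) + (- (1/4)) * (4 * ts b))) by (intros; field).
      rewrite rsum_lin.
      replace (rsum B (fun b => - (1/4) * (4 * ts b))) with (- (1/4) * rsum B (fun b => 4 * ts b) + rsum B (fun _ => 0)).
      2:{ rewrite <- rsum_lin. apply rsum_ext. intros; ring. }
      rewrite rsum_const, Hsts. nra.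
    - apply rsum_le. intros b _.
      replace (4 ^ b * exp (-2 * t b)) with (K * exp (-2 * (t b - ts b))).
      + pose proof (exp_ineq1_le (-2 * (t b - ts b))). nra.
      + unfold K. rewrite <- (key b a). fold (ts b).
        rewrite Rmult_assoc, <- exp_plus. f_equal. f_equal. ring. }
  assert (Hobj : dur_obj B tt = INR B * K).
  { apply Rle_antisym. rewrite <- Hobj_ts. apply Hopt, Hfs. apply Hlow, Hf. }
  assert (HKv : INR B * K = INR B / 2 * 2 ^ B * exp (- (E / (2 * INR B)))).
  { unfold K. replace (-2 * a) with ((INR (B - 1)) * ln 2 + - (E / (2 * INR B))).
    rewrite exp_plus, exp2.
    assert (P2 : 2 ^ B = 2 * 2 ^ (B - 1)) by (destruct B; [lia|simpl; rewrite Nat.sub_0_r; ring]). rewrite P2. field.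
    rewrite minus_INR by lia. unfold a. simpl INR. field. lra. }
  assert (M1 : MSE c B i0 tt = c * (INR B / 2) * 2 ^ B * exp (- (E / (2 * INR B)))).
  { unfold MSE. replace (rsum _ _) with (dur_obj B tt).
    rewrite Hobj, HKv. ring. unfold dur_obj, i0. apply rsum_ext. intros. f_equal. f_equal. ring. }
  assert (Hgeo : forall n, rsum n (fun b => 4 ^ b) = (4 ^ n - 1) / 3).
  { induction n; simpl rsum. simpl; field. rewrite IHn. simpl pow. field. }
  assert (M2 : MSE c B i0 (t0 B E) = c * ((4 ^ B - 1) / 3) * exp (- (E / (2 * INR B)))).
  { unfold MSE, i0, t0.
    rewrite (rsum_ext B _ (fun b => exp (- (E / (2 * INR B))) * 4 ^ b + 0)).
    rewrite rsum_lin, rsum_const, Hgeo. ring.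
    intros. replace (-2 * (2 - 1) * (E / (4 * INR B))) with (- (E / (2 * INR B))). ring.
    field. lra. }
  split; [exact M1|]. split; [exact M2|].
  rewrite M1, M2.
  assert (H4 : 1 < 4 ^ B).
  { replace B with (S (B - 1)) by lia. simpl. pose proof (pow_le 4 (B - 1)). 
    assert (1 <= 4 ^ (B - 1)) by (apply pow_R1_Rle; lra). lra. }
  pose proof (exp_pos (- (E / (2 * INR B)))).
  field. repeat split; lra.
Qed.
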